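(* For every $\mathsf T$-term $P$ and every $*$-term $Q$, the tree $se(P\land^\circ Q)$ has exactly one $\mathsf T$-$*$-decomposition, namely $(se(P)[\mathsf T\mapsto\triangle],\,se(Q))$.
   Context: Let $A$ be a nonempty set of atoms; terms are closed terms over constants $\mathsf T,\mathsf F$, atoms $a\in A$, unary $\neg$, binary $\land^\circ$, $\lor^\circ$. Evaluation trees $\mathcal T_A$: $\mathsf T,\mathsf F\in\mathcal T_A$ and $(X\unlhd a\unrhd Y)\in\mathcal T_A$ for $X,Y\in\mathcal T_A$, $a\in A$; depth $d(\mathsf T)=d(\mathsf F)=0$, $d(Y\unlhd a\unrhd Z)=1+\max(d(Y),d(Z))$. $\mathcal T_{A,\triangle}$: the same with leaves in $\{\mathsf T,\mathsf F,\triangle\}$. Leaf replacement $X[\ell_1\mapsto Y_1,\ldots]$ replaces every leaf labelled $\ell_i$ by $Y_i$. $se$: $se(\mathsf T)=\mathsf T$, $se(\mathsf F)=\mathsf F$, $se(a)=\mathsf T\unlhd a\unrhd\mathsf F$, $se(\neg P)=se(P)[\mathsf T\mapsto\mathsf F,\mathsf F\mapsto\mathsf T]$, $se(P\land^\circ Q)=se(P)[\mathsf T\mapsto se(Q)]$, $se(P\lor^\circ Q)=se(P)[\mathsf F\mapsto se(Q)]$. Syntactic categories ($a\in A$): $\mathsf T$-terms $P^{\mathsf T}::=\mathsf T\mid(a\land^\circ P^{\mathsf T})\lor^\circ P^{\mathsf T}$; $\mathsf F$-terms $P^{\mathsf F}::=\mathsf F\mid(a\lor^\circ P^{\mathsf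 F})\land^\circ P^{\mathsf F}$; $\ell$-terms $P^\ell::=(a\land^\circ P^{\mathsf T})\lor^\circ P^{\mathsf F}\mid(\neg a\land^\circ P^{\mathsf T})\lor^\circ P^{\mathsf F}$; $*$-terms $P^*::=P^c\mid P^d$, $P^c::=P^\ell\mid P^*\land^\circ P^d$, $P^d::=P^\ell\mid P^*\lor^\circ P^c$. A pair $(Y,Z)\in\mathcal T_{A,\triangle}\times\mathcal T_A$ is a candidate $\mathsf T$-$*$-decomposition (ctsd) of $X\in\mathcal T_A$ if $X=Y[\triangle\mapsto Z]$, $Y$ contains neither $\mathsf T$ nor $\mathsf F$, $Z$ contains both $\mathsf T$ and $\mathsf F$, and there is no pair $(U,V)\in\mathcal T_{A,\triangle}\times\mathcal T_A$ with $Z=U[\triangle\mapsto V]$, $U$ containing $\triangle$, $U\neq\triangle$, and $U$ containing neither $\mathsf T$ nor $\mathsf F$. A ctsd $(Y,Z)$ of $X$ is a $\mathsf T$-$*$-decomposition (tsd) if there is no other ctsd $(Y',Z')$ of $X$ with $d(Z')<d(Z)$. *)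

(* Defs.v *)
From Stdlib Require Import Arith.
Set Implicit Arguments.

Section Defs.
Variable A : Type.

(* closed terms over T, F, atoms, negation, left-sequential and/or *)
Inductive term : Type :=
| TT : term
| FF : term
| At : A -> term
| Neg : term -> term
| AndS : term -> term -> term
| OrS : term -> term -> term.

(* Trees of T_{A,triangle}; T_A is the subset with no triangle leaf. *)
Inductive tree : Type :=
| LT : tree
| LF : tree
| LD : tree                     (* the leaf triangle *)
| Node : tree -> A -> tree -> tree.  (* Node X a Y  =  X <| a |> Y *)

Fixpoint depth (X : tree) : nat :=
  match X with
  | Node Y _ Z => S (Nat.max (depth Y) (depth Z))
  | _ => 0
  end.

(* simultaneous leaf replacement X[T |-> yT, F |-> yF, triangle |-> yD] *)
Fixpoint repl (yT yF yD : tree) (X : tree) : tree :=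
  match X with
  | LT => yT
  | LF => yF
  | LD => yD
  | Node Y a Z => Node (repl yT yF yD Y) a (repl yT yF yD Z)
  end.

Fixpoint hasT (X : tree) : bool :=
  match X with LT => true | Node Y _ Z => hasT Y || hasT Z | _ => false end.
Fixpoint hasF (X : tree) : bool :=
  match X with LF => true | Node Y _ Z => hasF Y || hasF Z | _ => false end.
Fixpoint hasD (X : tree) : bool :=
  match X with LD => true | Node Y _ Z => hasD Y || hasD Z | _ => false end.

Definition inTA (X : tree) : Prop := hasD X = false.

Definition substD (Y Z : tree) : tree := repl LT LF Z Y.

(* short-circuit evaluation *)
Fixpoint se (P : term) : tree :=
  match P with
  | TT => LT
  | FF => LF
  | At a => Node LT a LF
  | Neg P => repl LF LT LD (se P)
  | AndS P Q => repl (se Q) LF LD (se P)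
  | OrS P Q => repl LT (se Q) LD (se P)
  end.

Inductive Tterm : term -> Prop :=
| Tterm_T : Tterm TT
| Tterm_step : forall a P1 P2, Tterm P1 -> Tterm P2 ->
    Tterm (OrS (AndS (At a) P1) P2).

Inductive Fterm : term -> Prop :=
| Fterm_F : Fterm FF
| Fterm_step : forall a P1 P2, Fterm P1 -> Fterm P2 ->
    Fterm (AndS (OrS (At a) P1) P2).

Inductive lterm : term -> Prop :=
| lterm_pos : forall a P1 P2, Tterm P1 -> Fterm P2 ->
    lterm (OrS (AndS (At a) P1) P2)
| lterm_neg : forall a P1 P2, Tterm P1 -> Fterm P2 ->
    lterm (OrS (AndS (Neg (At a)) P1) P2).

Inductive sterm : term -> Prop :=
| sterm_c : forall P, cterm P -> sterm P
| sterm_d : forall P, dterm P -> sterm P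
with cterm : term -> Prop :=
| cterm_l : forall P, lterm P -> cterm P
| cterm_and : forall P Q, sterm P -> dterm Q -> cterm (AndS P Q)
with dterm : term -> Prop :=
| dterm_l : forall P, lterm P -> dterm P
| dterm_or : forall P Q, sterm P -> cterm Q -> dterm (OrS P Q).

(* candidate T-*-decomposition (Y,Z) of X (X, Z in T_A, Y in T_{A,triangle}) *)
Definition ctsd (X Y Z : tree) : Prop :=
  inTA Z /\
  X = substD Y Z /\
  hasT Y = false /\ hasF Y = false /\
  hasT Z = true /\ hasF Z = true /\
  ~ (exists U V, inTA V /\ Z = substD U V /\ hasD U = true /\ U <> LD /\
                 hasT U = false /\ hasF U = false).

Definition tsd (X Y Z : tree) : Prop :=
  ctsd X Y Z /\
  ~ (exists Y' Z', ctsd X Y' Z' /\ (Y', Z') <> (Y, Z) /\ depth Z' < depth Z).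

End Defs.

Arguments LT {A}.
Arguments LF {A}.
Arguments LD {A}.
Arguments TT {A}.
Arguments FF {A}.

(* Main.v *)
Require Import Defs.
From Stdlib Require Import Arith Lia Bool.

Section S.
Variable A : Type.
Notation tree := (tree A).

Lemma hasT_repl (a b c X : tree) :
  hasT (repl a b c X) = (hasT X && hasT a) || (hasF X && hasT b) || (hasD X && hasT c).
Proof. induction X; simpl; try rewrite IHX1, IHX2;
  repeat match goal with |- context [hasT ?x] => destruct (hasT x) end;
  repeat match goal with |- context [hasF ?x] => destruct (hasF x) end;
  repeat match goal with |- context [hasD ?x] => destruct (hasD x) end; reflexivity. Qed.
Lemma hasF_repl (a b c X : tree) :
  hasF (repl a b c X) = (hasT X && hasF a) || (hasF X && hasF b) || (hasD X && hasF c).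
Proof. induction X; simpl; try rewrite IHX1, IHX2;
  repeat match goal with |- context [hasT ?x] => destruct (hasT x) end;
  repeat match goal with |- context [hasF ?x] => destruct (hasF x) end;
  repeat match goal with |- context [hasD ?x] => destruct (hasD x) end; reflexivity. Qed.
Lemma hasD_repl (a b c X : tree) :
  hasD (repl a b c X) = (hasT X && hasD a) || (hasF X && hasD b) || (hasD X && hasD c).
Proof. induction X; simpl; try rewrite IHX1, IHX2;
  repeat match goal with |- context [hasT ?x] => destruct (hasT x) end;
  repeat match goal with |- context [hasF ?x] => destruct (hasF x) end;
  repeat match goal with |- context [hasD ?x] => destruct (hasD x) end; reflexivity. Qed.

Lemma leaf_ex (X : tree) : hasT X || hasF X || hasD X = true.
Proof. induction X; simpl; auto.
  destruct (hasT X1), (hasF X1), (hasD X1), (hasT X2), (hasF X2), (hasD X2); simpl in *; auto. Qed.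

Lemma pureD (U : tree) : hasT U = false -> hasF U = false -> hasD U = true.
Proof. intros H1 H2. pose proof (leaf_ex U). rewrite H1, H2 in H. exact H. Qed.

Lemma repl_comp a b c a' b' c' (X : tree) :
  repl a b c (repl a' b' c' X) = repl (repl a b c a') (repl a b c b') (repl a b c c') X.
Proof. induction X; simpl; congruence. Qed.

Lemma repl_noD a b c c' (X : tree) : hasD X = false -> repl a b c X = repl a b c' X.
Proof. induction X; simpl; intros H; try discriminate; auto.
  apply orb_false_iff in H as [H1 H2]. rewrite IHX1, IHX2; auto. Qed.

Lemma repl_noF b (X : tree) : hasF X = false -> repl LT b LD X = X.
Proof. induction X; simpl; intros H; try discriminate; auto.
  apply orb_false_iff in H as [H1 H2]. rewrite IHX1, IHX2; auto. Qed.

Lemma repl_noT a (X : tree) : hasT X = false -> repl a LF LD X = X.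
Proof. induction X; simpl; intros H; try discriminate; auto.
  apply orb_false_iff in H as [H1 H2]. rewrite IHX1, IHX2; auto. Qed.

Lemma se_noD (P : term A) : hasD (se P) = false.
Proof. induction P; simpl; auto; rewrite hasD_repl;
  repeat match goal with H : hasD _ = false |- _ => rewrite H end;
  rewrite ?andb_false_r, ?andb_false_l; simpl; rewrite ?orb_false_r; auto. Qed.

Definition irr (Z : tree) : Prop :=
  ~ (exists U V, inTA V /\ Z = substD U V /\ hasD U = true /\ U <> LD /\
                 hasT U = false /\ hasF U = false).

Lemma mx_l x y z : x <= y -> x < S (Nat.max y z).
Proof. intros; destruct (Nat.max_spec y z) as [[? ->]|[? ->]]; lia. Qed.
Lemma mx_r x y z : x <= z -> x < S (Nat.max y z).
Proof. intros; destruct (Nat.max_spec y z) as [[? ->]|[? ->]]; lia. Qed.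

Lemma depth_Tle W (Y : tree) : hasT Y = true -> depth W <= depth (repl W LF LD Y).
Proof.
  induction Y; simpl; intros H; try discriminate; auto.
  apply orb_true_iff in H as [H|H]; [apply IHY1 in H|apply IHY2 in H]; apply Nat.lt_le_incl;
  [apply mx_l|apply mx_r]; auto.
Qed.
Lemma depth_T W (Y : tree) : hasT Y = true -> Y <> LT -> depth W < depth (repl W LF LD Y).
Proof.
  destruct Y; simpl; intros H H'; try discriminate; try congruence.
  apply orb_true_iff in H as [H|H]; [apply (depth_Tle W) in H|apply (depth_Tle W) in H];
  [apply mx_l|apply mx_r]; auto.
Qed.
Lemma depth_Fle W (Y : tree) : hasF Y = true -> depth W <= depth (repl LT W LD Y).
Proof.
  induction Y; simpl; intros H; try discriminate; auto.
  apply orb_true_iff in H as [H|H]; [apply IHY1 in H|apply IHY2 in H]; apply Nat.lt_le_incl;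
  [apply mx_l|apply mx_r]; auto.
Qed.
Lemma depth_F W (Y : tree) : hasF Y = true -> Y <> LF -> depth W < depth (repl LT W LD Y).
Proof.
  destruct Y; simpl; intros H H'; try discriminate; try congruence.
  apply orb_true_iff in H as [H|H]; [apply (depth_Fle W) in H|apply (depth_Fle W) in H];
  [apply mx_l|apply mx_r]; auto.
Qed.

Lemma inj_T W : hasT W = true -> forall X Y : tree, hasD X = false -> hasD Y = false ->
  repl W LF LD X = repl W LF LD Y -> X = Y.
Proof.
  intros HW. assert (Hd : forall Y : tree, Y <> LT -> W <> repl W LF LD Y).
  { intros Y HY E. destruct (hasT Y) eqn:HT.
    - pose proof (depth_T W Y HT HY). rewrite <- E in H. lia.
    - rewrite repl_noT in E by auto. subst. congruence. }
  induction X; intros Y HX HY E; destruct Y; simpl in *; try discriminate; auto.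
  - subst; discriminate.
  - exfalso. apply (Hd (Node Y1 a Y2)); [discriminate| exact E].
  - subst; discriminate.
  - exfalso. apply (Hd (Node X1 a X2)); [discriminate| symmetry; exact E].
  - apply orb_false_iff in HX as [? ?]. apply orb_false_iff in HY as [? ?].
    injection E; intros. f_equal; auto.
Qed.

Lemma inj_F W : hasF W = true -> forall X Y : tree, hasD X = false -> hasD Y = false ->
  repl LT W LD X = repl LT W LD Y -> X = Y.
Proof.
  intros HW. assert (Hd : forall Y : tree, Y <> LF -> W <> repl LT W LD Y).
  { intros Y HY E. destruct (hasF Y) eqn:HT.
    - pose proof (depth_F W Y HT HY). rewrite <- E in H. lia.
    - rewrite repl_noF in E by auto. subst. congruence. }
  induction X; intros Y HX HY E; destruct Y; simpl in *; try discriminate; auto.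
  - subst; discriminate.
  - subst; discriminate.
  - exfalso. apply (Hd (Node Y1 a Y2)); [discriminate| exact E].
  - exfalso. apply (Hd (Node X1 a X2)); [discriminate| symmetry; exact E].
  - apply orb_false_iff in HX as [? ?]. apply orb_false_iff in HY as [? ?].
    injection E; intros. f_equal; auto.
Qed.

Lemma key_T W : irr W -> hasT W = true -> forall U : tree, hasT U = false -> hasF U = false ->
  forall X V, hasD X = false -> hasD V = false -> repl W LF LD X = substD U V ->
  exists S, X = substD U S /\ V = repl W LF LD S /\ hasD S = false.
Proof.
  intros HW HT U. induction U; intros HU1 HU2 X V HX HV E; simpl in *; try discriminate.
  - exists X. unfold substD. simpl. auto.
  - apply orb_false_iff in HU1 as [? ?]. apply orb_false_iff in HU2 as [? ?].
    destruct X; simpl in *; try discriminate.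
    + exfalso. apply HW. exists (Node U1 a U2), V. simpl. repeat split; auto.
      simpl. rewrite pureD; auto. discriminate. all: simpl; rewrite ?H, ?H0, ?H1, ?H2; auto.
    + apply orb_false_iff in HX as [? ?]. injection E; intros E2 Ea E1.
      destruct (IHU1 H H1 X1 V H3 HV E1) as [S1 [? [? ?]]].
      destruct (IHU2 H0 H2 X2 V H4 HV E2) as [S2 [? [? ?]]].
      assert (S1 = S2) by (apply (inj_T W HT); congruence). subst.
      exists S2. unfold substD; simpl. auto.
Qed.

Lemma key_F W : irr W -> hasF W = true -> forall U : tree, hasT U = false -> hasF U = false ->
  forall X V, hasD X = false -> hasD V = false -> repl LT W LD X = substD U V ->
  exists S, X = substD U S /\ V = repl LT W LD S /\ hasD S = false.
Proof.
  intros HW HT U. induction U; intros HU1 HU2 X V HX HV E; simpl in *; try discriminate.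
  - exists X. unfold substD. simpl. auto.
  - apply orb_false_iff in HU1 as [? ?]. apply orb_false_iff in HU2 as [? ?].
    destruct X; simpl in *; try discriminate.
    + exfalso. apply HW. exists (Node U1 a U2), V. simpl. repeat split; auto.
      simpl. rewrite pureD; auto. discriminate. all: simpl; rewrite ?H, ?H0, ?H1, ?H2; auto.
    + apply orb_false_iff in HX as [? ?]. injection E; intros E2 Ea E1.
      destruct (IHU1 H H1 X1 V H3 HV E1) as [S1 [? [? ?]]].
      destruct (IHU2 H0 H2 X2 V H4 HV E2) as [S2 [? [? ?]]].
      assert (S1 = S2) by (apply (inj_F W HT); congruence). subst.
      exists S2. unfold substD; simpl. auto.
Qed.

Lemma Tterm_prop (P : term A) : Tterm P -> hasT (se P) = true /\ hasF (se P) = false.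
Proof.
  induction 1; simpl; auto.
  destruct IHTterm1, IHTterm2. rewrite repl_noF by auto. simpl. rewrite H1, H2, H3, H4. auto.
Qed.
Lemma Fterm_prop (P : term A) : Fterm P -> hasF (se P) = true /\ hasT (se P) = false.
Proof.
  induction 1; simpl; auto.
  destruct IHFterm1, IHFterm2. simpl. rewrite repl_noT by auto. rewrite H1, H2, H3, H4. auto.
Qed.

Lemma base_irr (L R : tree) a : hasF L = false -> hasT R = false -> irr (Node L a R).
Proof.
  intros HL HR [U [V [HV [E [HD [HU [HT HF]]]]]]].
  destruct U; simpl in *; try discriminate; try congruence.
  apply orb_false_iff in HT as [? ?]. apply orb_false_iff in HF as [? ?].
  injection E; intros E2 _ E1. subst.
  rewrite hasF_repl, pureD in HL by auto. rewrite hasT_repl, pureD in HR by auto.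
  rewrite H, H1 in HL. rewrite H0, H2 in HR. simpl in *.
  pose proof (leaf_ex V). unfold inTA in HV. rewrite HV, HL, HR in H3. discriminate.
Qed.

Lemma base_irr2 (L R : tree) a : hasT L = false -> hasF R = false -> irr (Node L a R).
Proof.
  intros HL HR [U [V [HV [E [HD [HU [HT HF]]]]]]].
  destruct U; simpl in *; try discriminate; try congruence.
  apply orb_false_iff in HT as [? ?]. apply orb_false_iff in HF as [? ?].
  injection E; intros E2 _ E1. subst.
  rewrite hasT_repl, pureD in HL by auto. rewrite hasF_repl, pureD in HR by auto.
  rewrite H1, H in HL. rewrite H2, H0 in HR. simpl in *.
  pose proof (leaf_ex V). unfold inTA in HV. rewrite HV, HL, HR in H3. discriminate.
Qed.

Lemma lterm_good (P : term A) : lterm P -> hasT (se P) = true /\ hasF (se P) = true /\ irr (se P).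
Proof.
  destruct 1 as [a P1 P2 H1 H2 | a P1 P2 H1 H2];
  destruct (Tterm_prop _ H1); destruct (Fterm_prop _ H2); simpl.
  - rewrite repl_noF by auto. rewrite H, H0, H3, H4. repeat split; auto.
    apply base_irr; auto.
  - rewrite repl_noF by auto. rewrite H, H0, H3, H4. simpl. repeat split; auto.
    apply base_irr2; auto.
Qed.

Scheme sterm_ind' := Induction for sterm Sort Prop
with cterm_ind' := Induction for cterm Sort Prop
with dterm_ind' := Induction for dterm Sort Prop.
Combined Scheme star_ind from sterm_ind', cterm_ind', dterm_ind'.

Definition good (P : term A) := hasT (se P) = true /\ hasF (se P) = true /\ irr (se P).

Lemma star_good :
  (forall P : term A, sterm P -> good P) /\ (forall P : term A, cterm P -> good P) /\ (forall P : term A, dterm P -> good P).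
Proof.
  apply star_ind; unfold good; intros; auto using lterm_good.
  - destruct H as [T1 [F1 I1]]. destruct H0 as [T2 [F2 I2]]. simpl.
    rewrite hasT_repl, hasF_repl, T1, F1, T2. simpl. split; [(rewrite ?orb_true_r; simpl; rewrite ?orb_true_r; reflexivity)|split; [(rewrite ?orb_true_r; simpl; rewrite ?orb_true_r; reflexivity)|]].
    intros [U [V [HV [E [HD [HU [HT HF]]]]]]].
    destruct (key_T _ I2 T2 U HT HF (se P) V (se_noD P) HV E) as [S [ES [_ HS]]].
    apply I1. exists U, S. repeat split; auto.
  - destruct H as [T1 [F1 I1]]. destruct H0 as [T2 [F2 I2]]. simpl.
    rewrite hasT_repl, hasF_repl, T1, F1, F2. simpl. split; [(rewrite ?orb_true_r; simpl; rewrite ?orb_true_r; reflexivity)|split; [(rewrite ?orb_true_r; simpl; rewrite ?orb_true_r; reflexivity)|]].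
    intros [U [V [HV [E [HD [HU [HT HF]]]]]]].
    destruct (key_F _ I2 F2 U HT HF (se P) V (se_noD P) HV E) as [S [ES [_ HS]]].
    apply I1. exists U, S. repeat split; auto.
Qed.

Lemma uniq_dec : forall (Y Y0 Z Z0 : tree), hasT Y = false -> hasF Y = false ->
  hasT Y0 = false -> hasF Y0 = false -> irr Z -> irr Z0 -> inTA Z -> inTA Z0 ->
  substD Y Z = substD Y0 Z0 -> Y = Y0 /\ Z = Z0.
Proof.
  induction Y; intros Y0 Z Z0 HT HF HT0 HF0 IZ IZ0 TZ TZ0 E; simpl in *; try discriminate.
  - destruct Y0; simpl in *; try discriminate.
    + unfold substD in E; simpl in E; auto.
    + exfalso. apply IZ. exists (Node Y0_1 a Y0_2), Z0. repeat split; auto.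
      apply pureD; auto. discriminate.
  - destruct Y0; simpl in *; try discriminate.
    + exfalso. apply IZ0. exists (Node Y1 a Y2), Z. repeat split; auto.
      apply pureD; auto. discriminate.
    + apply orb_false_iff in HT as [? ?]. apply orb_false_iff in HF as [? ?].
      apply orb_false_iff in HT0 as [? ?]. apply orb_false_iff in HF0 as [? ?].
      unfold substD in E; simpl in E. injection E; intros E2 Ea E1.
      destruct (IHY1 _ _ _ H H1 H3 H5 IZ IZ0 TZ TZ0 E1).
      destruct (IHY2 _ _ _ H0 H2 H4 H6 IZ IZ0 TZ TZ0 E2). subst. auto.
Qed.

End S.

Theorem theorem3p7 (A : Type) (HA : inhabited A) (P Q : term A) :
  Tterm P -> sterm Q ->
  tsd (se (AndS P Q)) (repl LD LF LD (se P)) (se Q) /\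
  (forall Y Z : tree A, tsd (se (AndS P Q)) Y Z ->
     Y = repl LD LF LD (se P) /\ Z = se Q).
Proof.
  intros HP HQ.
  destruct (Tterm_prop _ _ HP) as [PT PF].
  destruct (proj1 (star_good A) Q HQ) as [QT [QF QI]].
  set (Y0 := repl LD LF LD (se P)).
  assert (Y0T : hasT Y0 = false).
  { unfold Y0. rewrite hasT_repl, PF, se_noD. simpl. rewrite andb_false_r. auto. }
  assert (Y0F : hasF Y0 = false).
  { unfold Y0. rewrite hasF_repl, PF, se_noD. simpl. rewrite andb_false_r. auto. }
  assert (C : ctsd (se (AndS P Q)) Y0 (se Q)).
  { unfold ctsd. repeat split; auto.
    - apply se_noD.
    - simpl. unfold substD, Y0. rewrite repl_comp. simpl.
      apply repl_noD, se_noD. }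
  assert (U : forall Y Z, ctsd (se (AndS P Q)) Y Z -> Y = Y0 /\ Z = se Q).
  { intros Y Z [TZ [E [HT [HF [_ [_ IZ]]]]]].
    destruct C as [TZ0 [E0 _]].
    apply (uniq_dec A Y Y0 Z (se Q)); auto. congruence. }
  split.
  - split; auto. intros [Y' [Z' [HC [Hne _]]]]. apply Hne.
    destruct (U _ _ HC). subst. reflexivity.
  - intros Y Z [HC _]. apply U; auto.
Qed.
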